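(* Let $0<\alpha<1$, $0<\beta\leq 1$, $L=[-1,-\beta]\cup\{\alpha\}$, let $P\subset\mathbb{R}^d$ be an $L$-spherical code, and let $G$ be the graph on vertex set $P$ in which distinct $x,y\in P$ are adjacent iff $\langle x,y\rangle\in[-1,-\beta]$. Let $\varepsilon>0$. Suppose $p_1,\dots,p_n$ is an independent set in $G$, and suppose $p^{(1)},\dots,p^{(m)}\in P$ are distinct points of the form $p^{(i)}=v^{(i)}+u^{(i)}$ with $v^{(i)}\in\operatorname{span}\{p_1,\dots,p_n\}$ and $u^{(i)}$ orthogonal to $\operatorname{span}\{p_1,\dots,p_n\}$, such that $\langle v^{(i)},v^{(j)}\rangle>\alpha+\varepsilon$ for all $i,j$. Then $m\leq 1/\varepsilon+1$.
   Context: For a set $L\subseteq[-1,1]$, an $L$-spherical code in $\mathbb{R}^d$ is a set $P$ of unit vectors such that $\langle x,y\rangle\in L$ for all distinct $x,y\in P$. *)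

(* Defs.v *)
From HB Require Import structures.
From mathcomp Require Import all_boot all_order all_algebra.
From mathcomp Require Import reals.
Set Implicit Arguments. Unset Strict Implicit. Unset Printing Implicit Defensive.
Import Order.TTheory GRing.Theory Num.Theory.
Local Open Scope ring_scope.

Definition dot (R : realType) (d : nat) (x y : 'rV[R]_d) : R :=
  \sum_(k < d) x 0 k * y 0 k.

Definition Lset (R : realType) (alpha beta : R) (t : R) : Prop :=
  (-1 <= t /\ t <= - beta) \/ t = alpha.

Definition spherical_code (R : realType) (d : nat) (L : R -> Prop)
  (P : 'rV[R]_d -> Prop) : Prop :=
  (forall x, P x -> dot x x = 1) /\
  (forall x y, P x -> P y -> x <> y -> L (dot x y)).

Definition adjG (R : realType) (d : nat) (beta : R) (x y : 'rV[R]_d) : Prop :=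
  x <> y /\ (-1 <= dot x y /\ dot x y <= - beta).

Definition independent_in (R : realType) (d n : nat) (beta : R)
  (P : 'rV[R]_d -> Prop) (p : 'I_n -> 'rV[R]_d) : Prop :=
  injective p /\ (forall i, P (p i)) /\ (forall i j, ~ adjG beta (p i) (p j)).

Definition in_span (R : realType) (d n : nat) (p : 'I_n -> 'rV[R]_d) (v : 'rV[R]_d) : Prop :=
  exists c : 'I_n -> R, v = \sum_(i < n) c i *: p i.

Definition orth_span (R : realType) (d n : nat) (p : 'I_n -> 'rV[R]_d) (u : 'rV[R]_d) : Prop :=
  forall w, in_span p w -> dot u w = 0.

(* Main.v *)
Require Import Defs.
From HB Require Import structures.
From mathcomp Require Import all_boot all_order all_algebra.
From mathcomp Require Import reals.
From mathcomp Require Import ring lra.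
Import Order.TTheory GRing.Theory Num.Theory.
Local Open Scope ring_scope.

Section H.
Context {R : realType} {d : nat}.
Implicit Types x y z : 'rV[R]_d.

Lemma dotC x y : dot x y = dot y x.
Proof. by rewrite /dot; apply: eq_bigr => k _; rewrite mulrC. Qed.

Lemma dotDl x y z : dot (x + y) z = dot x z + dot y z.
Proof. by rewrite /dot -big_split; apply: eq_bigr => k _; rewrite !mxE mulrDl. Qed.

Lemma dotDr x y z : dot z (x + y) = dot z x + dot z y.
Proof. by rewrite dotC dotDl !(dotC z). Qed.

Lemma dot0l y : dot 0 y = 0.
Proof. by rewrite /dot big1 // => k _; rewrite mxE mul0r. Qed.

Lemma dot_ge0 x : 0 <= dot x x.
Proof. by rewrite /dot; apply: sumr_ge0 => k _; rewrite -expr2 sqr_ge0. Qed.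

Lemma dot_suml (I : finType) (f : I -> 'rV[R]_d) y :
  dot (\sum_i f i) y = \sum_i dot (f i) y.
Proof. by apply: (big_morph (fun x => dot x y) (fun a b => dotDl a b y) (dot0l y)). Qed.

Lemma dot_sumr (I : finType) (f : I -> 'rV[R]_d) y :
  dot y (\sum_i f i) = \sum_i dot y (f i).
Proof. by rewrite dotC dot_suml; apply: eq_bigr => i _; rewrite dotC. Qed.
End H.

Theorem lemma5 (R : realType) (d n m : nat) (alpha beta eps : R)
  (P : 'rV[R]_d -> Prop)
  (p : 'I_n -> 'rV[R]_d) (q v u : 'I_m -> 'rV[R]_d) :
  0 < alpha -> alpha < 1 -> 0 < beta -> beta <= 1 ->
  spherical_code (Lset alpha beta) P ->
  0 < eps ->
  independent_in beta P p ->
  injective q ->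
  (forall i, P (q i)) ->
  (forall i, q i = v i + u i) ->
  (forall i, in_span p (v i)) ->
  (forall i, orth_span p (u i)) ->
  (forall i j, alpha + eps < dot (v i) (v j)) ->
  (m%:R : R) <= 1 / eps + 1.
Proof.
move=> a0 a1 b0 b1 [Hunit HL] e0 _ qinj Pq qE vs uo vv.
have Hq : forall i j, dot (q i) (q j) = dot (v i) (v j) + dot (u i) (u j).
  move=> i j; rewrite !qE dotDl !dotDr.
  have h1 : dot (v i) (u j) = 0 by rewrite dotC; apply: uo.
  have h2 : dot (u i) (v j) = 0 by apply: uo.
  by rewrite h1 h2 add0r addr0.
have Hb : forall i j, dot (u i) (u j) <= (if j == i then 1 + eps else 0) - eps.
  move=> i j; case: eqP => [->|ne] /=.
    have := Hunit _ (Pq i); rewrite Hq => h; have := vv i i; lra.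
  have qne : q i <> q j by move=> /qinj e; apply: ne.
  have := HL _ _ (Pq i) (Pq j) qne; rewrite Hq.
  have := vv i j; rewrite /Lset; lra.
have H0 : 0 <= \sum_(i < m) \sum_(j < m) ((if j == i then 1 + eps else 0) - eps).
  have h0 := dot_ge0 (\sum_i u i); rewrite dot_suml in h0.
  have h1 : \sum_i dot (u i) (\sum_j u j) <= \sum_(i < m) \sum_(j < m) ((if j == i then 1 + eps else 0) - eps).
    apply: ler_sum => i _; rewrite dot_sumr.
    by apply: ler_sum => j _; apply: Hb.
  lra.
have Hs : forall i : 'I_m, \sum_(j < m) ((if j == i then 1 + eps else 0) - eps)
   = 1 + eps - m%:R * eps.
  move=> i; rewrite big_split /= -big_mkcond big_pred1_eq sumrN sumr_const card_ord.
  by rewrite mulr_natl.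
rewrite (eq_bigr _ (fun i _ => Hs i)) sumr_const card_ord -mulr_natl in H0.
case: m q v u qinj Pq qE vs uo vv Hq Hb Hs H0 => [|m'] q v u qinj Pq qE vs uo vv Hq Hb Hs H0.
  have : 0 < 1 / eps by rewrite divr_gt0. lra.
have hm : (0 : R) < m'.+1%:R by rewrite ltr0n.
have h2 : m'.+1%:R * eps <= 1 + eps.
  nra.
have h3 : (1 / eps) * eps = 1 by rewrite mul1r mulVf ?gt_eqF.
move: h2 h3; set t := 1 / eps; set k := m'.+1%:R => h2 h3.
nra.
Qed.
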